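(* Consider the opinion--action model described in the context with $\phi\in(0,1)$ and arbitrary initial values $x_i(0),y_i(0)\in[0,1]$. Suppose there exists a finite time $T>0$ such that $\Theta(T)\neq\emptyset$ and for all integers $t\ge T$, $\Omega(t)=\Omega:=\Omega(T)$ and $\Theta(t)=\Theta:=\Theta(T)$. Then $z_i(t)=z_i(T)$ for all $i\in\Theta$ and all $t\ge T$, and $\lim_{t\to\infty}\mathrm{dist}\big(z_j(t),\operatorname{conv}\{z_i(T)\mid i\in\Theta\}\big)=0$ for all $j\in\Omega$.
   Context: Fix an integer $n\ge 1$, agent set $\mathcal{V}=\{1,\dots,n\}$, a confidence threshold $\epsilon\in[0,1]$ and a decision weight $\phi\in[0,1]$. Each agent $i$ has opinion $x_i(t)\in[0,1]$ and action $y_i(t)\in[0,1]$. For $t\in\mathbb{Z}_{\ge0}$ the model evolves by: $\mathcal{N}_i(t)=\{j\in\mathcal{V}\mid j\neq i,\ |x_i(t)-y_j(t)|\le\epsilon\}$; $x_i(t+1)=\frac{x_i(t)+\sum_{j\in\mathcal{N}_i(t)}y_j(t)}{|\mathcal{N}_i(t)|+1}$; $y_i(t+1)=\phi\,x_i(t+1)+(1-\phi)\,y_{\mathrm{avg}}(t)$ with $y_{\mathrm{avg}}(t)=\frac1n\sum_{k=1}^n y_k(t)$. For $t\ge1$ the augmented state is $\mathbf{z}(t)\in\mathbb{R}^{2n}$ with $z_i(t)=x_i(t)$ and $z_{n+i}(t)=y_i(t-1)$ for $i\in\mathcal{V}$ (indices $1,\dots,n$ are ''opinion nodes'', $n+1,\dots,2n$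 ''action nodes''). For $t\ge1$ define $\Theta(t)=\{i\in\{1,\dots,n\}\mid |\mathcal{N}_i(t)|=0\}$ and $\Omega(t)=\{n+1,\dots,2n\}\cup\{i\in\{1,\dots,n\}\mid |\mathcal{N}_i(t)|>0\}$. $\operatorname{conv}$ denotes convex hull and $\mathrm{dist}(x,S)=\inf_{y\in S}|x-y|$. *)

(* Defs.v *)
From HB Require Import structures.
From mathcomp Require Import all_boot all_order all_algebra.
From mathcomp Require Import all_classical all_reals topology normedtype sequences.
Set Implicit Arguments. Unset Strict Implicit. Unset Printing Implicit Defensive.
Import Order.TTheory GRing.Theory Num.Theory.
Local Open Scope ring_scope.
Local Open Scope classical_set_scope.

Section Model.
Variables (R : realType) (n : nat) (eps phi : R).

(* state at a time: (opinions x, actions y) *)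
Definition state := (('I_n -> R) * ('I_n -> R))%type.

Definition nbr (s : state) (i : 'I_n) : {set 'I_n} :=
  [set j | (j != i) && (`|s.1 i - s.2 j| <= eps)].

Definition yavg (s : state) : R := (\sum_(k < n) s.2 k) / n%:R.

Definition step (s : state) : state :=
  let x' := fun i => (s.1 i + \sum_(j in nbr s i) s.2 j) / (#|nbr s i|%:R + 1) in
  (x', fun i => phi * x' i + (1 - phi) * yavg s).

Definition traj (x0 y0 : 'I_n -> R) (t : nat) : state := iter t step (x0, y0).

Definition xs x0 y0 t i := (traj x0 y0 t).1 i.
Definition ys x0 y0 t i := (traj x0 y0 t).2 i.

Definition Nb x0 y0 t i := nbr (traj x0 y0 t) i.

(* augmented state z(t), t >= 1; index inl i = opinion node i,
   inr i = action node n+i *)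
Definition z x0 y0 (t : nat) (k : 'I_n + 'I_n) : R :=
  match k with inl i => xs x0 y0 t i | inr i => ys x0 y0 t.-1 i end.

Definition Theta x0 y0 t : {set 'I_n + 'I_n} :=
  [set k | if k is inl i then #|Nb x0 y0 t i| == 0%N else false].

Definition Omega x0 y0 t : {set 'I_n + 'I_n} :=
  [set k | if k is inl i then (0 < #|Nb x0 y0 t i|)%N else true].

End Model.

Definition conv (R : realType) (I : finType) (A : {set I}) (p : I -> R) : set R :=
  [set v | exists w : I -> R, (forall k, k \in A -> 0 <= w k) /\
     \sum_(k in A) w k = 1 /\ v = \sum_(k in A) w k * p k].

Definition dist (R : realType) (x : R) (S : set R) : R :=
  inf [set `|x - y| | y in S].

(* Main.v *)
Require Import Defs.
From HB Require Import structures.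
From mathcomp Require Import all_boot all_order all_algebra.
From mathcomp Require Import all_classical all_reals topology normedtype sequences.
From mathcomp Require Import ring lra.
Import Order.TTheory GRing.Theory Num.Theory numFieldNormedType.Exports.
Local Open Scope ring_scope.
Local Open Scope classical_set_scope.

Section Gen.
Variables (R : realType) (n : nat) (phi : R) (T : nat).
Variables (X Y : nat -> 'I_n -> R) (N : nat -> 'I_n -> {set 'I_n}).
Hypothesis n1 : (0 < n)%N.
Hypothesis phi01 : 0 < phi < 1.
Hypothesis HX : forall t i, X t.+1 i =
  (X t i + \sum_(j in N t i) Y t j) / (#|N t i|%:R + 1).
Hypothesis HY : forall t i, Y t.+1 i =
  phi * X t.+1 i + (1 - phi) * ((\sum_k Y t k) / n%:R).
Hypothesis HN : forall t, (T <= t)%N -> forall i,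
  (#|N t i| == 0%N) = (#|N T i| == 0%N).

Lemma cvx_le (p x u a v : R) : 0 <= p <= 1 -> x <= u -> a <= v ->
  p * x + (1 - p) * a <= p * u + (1 - p) * v.
Proof.
case/andP=> p0 p1 h1 h2; apply: lerD; first exact: ler_wpM2l.
by apply: ler_wpM2l => //; rewrite subr_ge0.
Qed.
Arguments cvx_le {p x u a v}.

Lemma aux1 (x A B h : R) : x <= A -> h <= B - A -> 0 <= h -> x <= B - h / 2.
Proof. move=> *; lra. Qed.

Lemma aux2 (x s k B h : R) : x <= B -> s <= k * (B - h) -> 1 <= k -> 0 <= h ->
  x + s <= (B - h / 2) * (k + 1).
Proof.
move=> h1 h2 h3 h4.
have : (k - 1) * h >= 0 by apply: mulr_ge0; lra.
have -> : (B - h / 2) * (k + 1) = k * (B - h) + B + (k - 1) * h / 2 by field.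
lra.
Qed.

Lemma gen_fixed i : #|N T i| == 0%N -> forall t, (T <= t)%N -> X t i = X T i.
Proof.
move=> Hi; elim=> [|t IH]; first by rewrite leqn0 => /eqP ->.
rewrite leq_eqVlt => /orP [/eqP <- //|]; rewrite ltnS => Ht.
have : #|N t i| == 0%N by rewrite HN.
rewrite cards_eq0 => /eqP E.
by rewrite HX E big_set0 cards0 addr0 add0r divr1 IH.
Qed.

Lemma sum_le (S : {set 'I_n}) (F : 'I_n -> R) B :
  (forall i, F i <= B) -> \sum_(j in S) F j <= #|S|%:R * B.
Proof.
move=> H; apply: le_trans (_ : \sum_(j in S) B <= _).
  by apply: ler_sum => j _.
by rewrite sumr_const mulr_natl.
Qed.

Lemma avg_le t B : (forall i, Y t i <= B) -> (\sum_k Y t k) / n%:R <= B.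
Proof.
move=> H; have n0 : 0 < n%:R :> R by rewrite ltr0n.
rewrite ler_pdivrMr //.
have := sum_le [set: 'I_n] (Y t) B H.
rewrite cardsT card_ord mulrC.
have -> // : \sum_(j in [set: 'I_n]%SET) Y t j = \sum_k Y t k.
by apply: eq_bigl => j; rewrite finset.in_setT.
Qed.

Lemma gen_mono t B : (forall i, X t i <= B) -> (forall i, Y t i <= B) ->
  (forall i, X t.+1 i <= B) /\ (forall i, Y t.+1 i <= B).
Proof.
move=> HXB HYB.
have HX1 : forall i, X t.+1 i <= B.
  move=> i; rewrite HX ler_pdivrMr; last by rewrite ltr_wpDl.
  have := sum_le (N t i) (Y t) B HYB; have := HXB i.
  set k := (#|N t i|%:R : R); lra.
split=> // i; rewrite HY.
have := avg_le t B HYB; have := HX1 i.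
set a := (\sum_k Y t k) / n%:R; set x := X t.+1 i.
have p01 : 0 <= phi <= 1 by case/andP: phi01 => p0 p1; rewrite !ltW.
move=> h1 h2; have := cvx_le p01 h1 h2; lra.
Qed.


Lemma sum_ind (F : 'I_n -> R) i0 :
  \sum_k F k * (k == i0)%:R = F i0.
Proof.
rewrite (bigD1 i0) //= eqxx mulr1 big1 ?addr0 // => k /negbTE ->.
by rewrite mulr0.
Qed.

Lemma gen_contract t A B i0 : (T <= t)%N ->
  (forall i, #|N T i| == 0%N -> X T i <= A) -> #|N T i0| == 0%N -> A <= B ->
  (forall i, X t i <= B) -> (forall i, Y t i <= B) ->
  (forall i, X t.+3 i <= B - (1 - phi) * phi / (2 * n%:R) * (B - A)) /\ (forall i, Y t.+3 i <= B - (1 - phi) * phi / (2 * n%:R) * (B - A)).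
Proof.
move=> Ht HA Hi0 AB HXB HYB.
case/andP: phi01 => p0 p1.
have n0 : 0 < n%:R :> R by rewrite ltr0n.
have n1' : 1 <= n%:R :> R by rewrite ler1n.
set D := B - A.
have D0 : 0 <= D by rewrite /D subr_ge0.
set g := phi * D / n%:R.
have g0 : 0 <= g by rewrite /g divr_ge0 // mulr_ge0 // ltW.
have gD : g <= D.
  rewrite /g ler_pdivrMr //.
  have := ler_wpM2r D0 (ltW p1); have := ler_wpM2l D0 n1'; lra.
have p01 : 0 <= phi <= 1 by rewrite !ltW.
have -> : (1 - phi) * phi / (2 * n%:R) * D = (1 - phi) * g / 2.
  by rewrite /g; field; rewrite pnatr_eq0 -lt0n.
have [X1 Y1] := gen_mono t B HXB HYB.
have Y1i0 : Y t.+1 i0 <= B - phi * D.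
  rewrite HY (gen_fixed i0 Hi0 t.+1) //; last by apply: leqW.
  have := HA i0 Hi0; have := avg_le t B HYB.
  set a := (\sum_k Y t k) / n%:R; rewrite /D => h1 h2.
  have := cvx_le p01 h2 h1; lra.
have avg1 : (\sum_k Y t.+1 k) / n%:R <= B - g.
  rewrite ler_pdivrMr //.
  have -> : (B - g) * n%:R = \sum_k (B - phi * D * (k == i0)%:R).
    rewrite sumrB sumr_const card_ord sum_ind /g; field.
    by rewrite pnatr_eq0 -lt0n.
  apply: ler_sum => k _; case: eqP => [->|_]; first by rewrite mulr1.
  by rewrite mulr0 subr0.
have [X2 _] := gen_mono t.+1 B X1 Y1.
have Y2 : forall i, Y t.+2 i <= B - (1 - phi) * g.
  move=> i; rewrite HY; have := X2 i; move: avg1.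
  set a := (\sum_k Y t.+1 k) / n%:R; set x := X t.+2 i => h1 h2.
  have := cvx_le p01 h2 h1; lra.
have avg2 := avg_le t.+2 _ Y2.
set h := (1 - phi) * g.
have h0 : 0 <= h by rewrite /h mulr_ge0 // subr_ge0 ltW.
have hD : h <= D.
  have h1 : 1 - phi <= 1 by lra.
  have := ler_wpM2r g0 h1; rewrite /h mul1r; lra.
have X3 : forall i, X t.+3 i <= B - h / 2.
  move=> i; case E : (#|N t.+2 i| == 0%N).
    have Ht1 := leq_trans Ht (leqnSn t).
    have Ht2 := leq_trans Ht1 (leqnSn _).
    have Ht3 := leq_trans Ht2 (leqnSn _).
    have E' : #|N T i| == 0%N by rewrite -(HN t.+2) ?E.
    rewrite (gen_fixed i E' t.+3) //.
    by apply: aux1 (HA i E') hD h0.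
  rewrite HX ler_pdivrMr; last by rewrite ltr_wpDl.
  have k1 : 1 <= #|N t.+2 i|%:R :> R by rewrite ler1n lt0n E.
  by apply: aux2 (X2 i) (sum_le (N t.+2 i) (Y t.+2) _ Y2) k1 h0.
split=> // i; rewrite HY; have := X3 i; move: avg2.
set a := (\sum_k Y t.+2 k) / n%:R; set x := X t.+3 i => h1 h2.
rewrite -/h in h1.
have := cvx_le p01 h2 h1.
have : 0 <= (1 - phi) * h by apply: mulr_ge0 => //; rewrite subr_ge0 ltW.
lra.
Qed.


Lemma gen_from s B : (forall i, X s i <= B) -> (forall i, Y s i <= B) ->
  forall t, (s <= t)%N -> (forall i, X t i <= B) /\ (forall i, Y t i <= B).
Proof.
move=> hx hy; elim=> [|t IH]; first by rewrite leqn0 => /eqP <-.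
rewrite leq_eqVlt => /orP [/eqP <- //|]; rewrite ltnS => Ht.
by have [a b] := IH Ht; apply: gen_mono.
Qed.

Let c := (1 - phi) * phi / (2 * n%:R).
Let q := 1 - c.

Lemma c01 : 0 < c < 1.
Proof.
case/andP: phi01 => p0 p1.
have n1' : 1 <= n%:R :> R by rewrite ler1n.
have c0 : 0 < c by rewrite /c divr_gt0 ?mulr_gt0 ?subr_gt0 // ltr0n.
rewrite c0 /= /c ltr_pdivrMr; last by rewrite mulr_gt0 // ltr0n.
have : (1 - phi) * phi < 1 * 1 by apply: ltr_pM; lra.
lra.
Qed.

Lemma gen_iter A i0 D0 :
  (forall i, #|N T i| == 0%N -> X T i <= A) -> #|N T i0| == 0%N -> 0 <= D0 ->
  (forall i, X T i <= A + D0) -> (forall i, Y T i <= A + D0) ->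
  forall k, (forall i, X (T + 3 * k)%N i <= A + q ^+ k * D0) /\
            (forall i, Y (T + 3 * k)%N i <= A + q ^+ k * D0).
Proof.
move=> HA Hi0 D0p hx hy; elim=> [|k [IHx IHy]].
  by rewrite muln0 addn0 expr0 mul1r.
have q0 : 0 <= q by rewrite /q subr_ge0; case/andP: c01 => _ /ltW.
have AB : A <= A + q ^+ k * D0 by rewrite lerDl mulr_ge0 // exprn_ge0.
have := gen_contract (T + 3 * k) A (A + q ^+ k * D0) i0 (leq_addr (3 * k) T) HA Hi0 AB IHx IHy.
have -> : (A + q ^+ k * D0 - (1 - phi) * phi / (2 * n%:R) * (A + q ^+ k * D0 - A)
   = A + q ^+ k.+1 * D0).
  by rewrite exprS /q /c; ring.
by rewrite mulnSr addnA addn3.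
Qed.

Lemma gen_upper A i0 :
  (forall i, #|N T i| == 0%N -> X T i <= A) -> #|N T i0| == 0%N ->
  forall e, 0 < e -> exists M, forall t, (M <= t)%N ->
    (forall i, X t i <= A + e) /\ (forall i, Y t i <= A + e).
Proof.
move=> HA Hi0 e e0.
pose D0 := `|A| + \sum_i (`|X T i| + `|Y T i|).
have sge : forall i, `|X T i| + `|Y T i| <= \sum_i (`|X T i| + `|Y T i|).
  move=> i; rewrite (bigD1 i) //= lerDl; apply: sumr_ge0 => j _.
  by rewrite addr_ge0.
have AA : 0 <= A + `|A|.
  by have := ler_norm (- A); rewrite normrN => h; lra.
have D0p : 0 <= D0 by rewrite /D0 addr_ge0 // sumr_ge0 // => j _; rewrite addr_ge0.
have hx : forall i, X T i <= A + D0.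
  move=> i; have := sge i; have := ler_norm (X T i); have := normr_ge0 (Y T i).
  rewrite /D0; lra.
have hy : forall i, Y T i <= A + D0.
  move=> i; have := sge i; have := ler_norm (Y T i); have := normr_ge0 (X T i).
  rewrite /D0; lra.
have [q0 q1] : 0 <= q /\ q < 1.
  by rewrite /q; case/andP: c01 => a b; split; lra.
have qn : `|q| < 1 by rewrite ger0_norm.
have e'0 : 0 < e / (D0 + 1) by rewrite divr_gt0 // ltr_wpDl.
have := cvg_expr qn; move/cvgr0Pnorm_lt => /(_ _ e'0) [K _ HK].
have {HK} HK := HK K (leqnn K).
rewrite /= ger0_norm ?exprn_ge0 // ltr_pdivlMr ?ltr_wpDl // in HK.
have [ix iy] := gen_iter A i0 D0 HA Hi0 D0p hx hy K.
exists (T + 3 * K)%N => t Ht.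
have le : A + q ^+ K * D0 <= A + e.
  rewrite lerD2l; apply: le_trans (ltW HK).
  by rewrite ler_wpM2l ?exprn_ge0 // lerDl.
have [jx jy] := gen_from _ _ ix iy t Ht.
by split=> i; [apply: le_trans (jx i) le | apply: le_trans (jy i) le].
Qed.

End Gen.

Lemma ex_max (R : realType) (I : finType) (P : pred I) (f : I -> R) i0 :
  P i0 -> exists2 m, P m & forall i, P i -> f i <= f m.
Proof.
move=> Pi0; case: (arg_maxP f Pi0) => m Pm H; exists m => // i Pi; exact: H.
Qed.

Section Dist.
Variables (R : realType) (I : finType) (Th : {set I}) (a : I -> R).

Lemma sum_ind_in (F : I -> R) i : i \in Th ->
  \sum_(k in Th) (k == i)%:R * F k = F i.
Proof.
move=> Hi; rewrite (bigD1 i) //= eqxx mul1r big1 ?addr0 // => k /andP[_ /negbTE ->].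
by rewrite mul0r.
Qed.

Lemma conv2 i1 i2 l : i1 \in Th -> i2 \in Th -> 0 <= l <= 1 ->
  conv Th a (l * a i1 + (1 - l) * a i2).
Proof.
move=> h1 h2 /andP[l0 l1].
have key : forall F : I -> R, \sum_(k in Th) (l * (k == i1)%:R + (1 - l) * (k == i2)%:R) * F k
   = l * F i1 + (1 - l) * F i2.
  move=> F.
  rewrite (eq_bigr (fun k => l * ((k == i1)%:R * F k) + (1 - l) * ((k == i2)%:R * F k)));
    last by move=> k _; ring.
  by rewrite big_split /= -!mulr_sumr !sum_ind_in.
exists (fun k => l * (k == i1)%:R + (1 - l) * (k == i2)%:R); split.
  move=> k _; apply: addr_ge0; apply: mulr_ge0 => //; by rewrite ?subr_ge0.
split; last by rewrite key.
have := key (fun _ => 1); rewrite [l * 1]mulr1 [(1 - l) * 1]mulr1 => h.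
rewrite (eq_bigr (fun k => (l * (k == i1)%:R + (1 - l) * (k == i2)%:R) * 1)).
  by rewrite h; ring.
by move=> k _; rewrite mulr1.
Qed.
Arguments conv2 {i1 i2 l}.

Lemma dist_ge0 v : (exists y, conv Th a y) -> 0 <= dist v (conv Th a).
Proof.
move=> [y hy]; apply: lb_le_inf; first by exists `|v - y|, y.
by move=> _ [y' _ <-].
Qed.

Lemma dist_le v y : conv Th a y -> dist v (conv Th a) <= `|v - y|.
Proof.
move=> hy; apply: ge_inf; last by exists y.
by exists 0 => _ [y' _ <-].
Qed.
Arguments dist_le v {y}.

Lemma dist_bound imin imax v e :
  imin \in Th -> imax \in Th -> a imin <= a imax -> 0 <= e ->
  a imin - e <= v -> v <= a imax + e -> dist v (conv Th a) <= e.
Proof.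
move=> hmin hmax hle e0 h1 h2.
have cmem : forall i, i \in Th -> conv Th a (a i).
  move=> i hi; have := conv2 hi hi (_ : 0 <= 1 <= 1).
  by rewrite subrr mul0r addr0 mul1r; apply; rewrite ler01 lexx.
case: (lerP v (a imin)) => hv1.
  apply: le_trans (dist_le v (cmem _ hmin)) _.
  by rewrite ler0_norm ?subr_le0 //; lra.
case: (lerP (a imax) v) => hv2.
  apply: le_trans (dist_le v (cmem _ hmax)) _.
  by rewrite ger0_norm ?subr_ge0 //; lra.
have hlt : a imin < a imax by apply: lt_trans hv2.
pose l := (v - a imin) / (a imax - a imin).
have d0 : 0 < a imax - a imin by rewrite subr_gt0.
have hl : 0 <= l <= 1.
  apply/andP; split; first by rewrite /l divr_ge0 // subr_ge0 ltW.
  rewrite /l ler_pdivrMr // mul1r; lra.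
have := dist_le v (conv2 hmax hmin hl).
have -> : l * a imax + (1 - l) * a imin = v.
  by rewrite /l; field; rewrite subr_eq0 gt_eqF.
by rewrite subrr normr0 => h; apply: le_trans h e0.
Qed.

End Dist.

Theorem proposition3 (R : realType) (n : nat) (eps phi : R) (x0 y0 : 'I_n -> R)
  (T : nat) :
  (1 <= n)%N ->
  0 <= eps <= 1 ->
  0 < phi < 1 ->
  (forall i, 0 <= x0 i <= 1) ->
  (forall i, 0 <= y0 i <= 1) ->
  (0 < T)%N ->
  Theta eps phi x0 y0 T != finset.set0 ->
  (forall t : nat, (T <= t)%N ->
     Omega eps phi x0 y0 t = Omega eps phi x0 y0 T /\
     Theta eps phi x0 y0 t = Theta eps phi x0 y0 T) ->
  (forall i, i \in Theta eps phi x0 y0 T -> forall t : nat, (T <= t)%N ->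
     z eps phi x0 y0 t i = z eps phi x0 y0 T i) /\
  (forall j, j \in Omega eps phi x0 y0 T ->
     (fun t : nat => dist (z eps phi x0 y0 t j)
        (conv (Theta eps phi x0 y0 T) (z eps phi x0 y0 T))) @ \oo --> (0 : R)).
Proof.
move=> n1 _ phi01 _ _ _ HTh Hst.
have HX : forall t i, xs eps phi x0 y0 t.+1 i =
  (xs eps phi x0 y0 t i + \sum_(j in Nb eps phi x0 y0 t i) ys eps phi x0 y0 t j) /
  (#|Nb eps phi x0 y0 t i|%:R + 1) by [].
have HY : forall t i, ys eps phi x0 y0 t.+1 i =
  phi * xs eps phi x0 y0 t.+1 i + (1 - phi) * ((\sum_k ys eps phi x0 y0 t k) / n%:R) by [].
have HN : forall t, (T <= t)%N -> forall i,
    (#|Nb eps phi x0 y0 t i| == 0%N) = (#|Nb eps phi x0 y0 T i| == 0%N).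
  move=> t Ht i; case: (Hst t Ht) => _ E.
  have h1 : (inl i \in Theta eps phi x0 y0 t) = (#|Nb eps phi x0 y0 t i| == 0%N) by rewrite inE.
  have h2 : (inl i \in Theta eps phi x0 y0 T) = (#|Nb eps phi x0 y0 T i| == 0%N) by rewrite inE.
  by rewrite -h1 -h2 E.
have HXn : forall t i, - xs eps phi x0 y0 t.+1 i =
  (- xs eps phi x0 y0 t i + \sum_(j in Nb eps phi x0 y0 t i) - ys eps phi x0 y0 t j) /
  (#|Nb eps phi x0 y0 t i|%:R + 1).
  by move=> t i; rewrite HX sumrN -opprD mulNr.
have HYn : forall t i, - ys eps phi x0 y0 t.+1 i =
  phi * - xs eps phi x0 y0 t.+1 i + (1 - phi) * ((\sum_k - ys eps phi x0 y0 t k) / n%:R).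
  by move=> t i; rewrite HY sumrN mulNr !mulrN opprD.
have n0 : (0 < n)%N by [].
have fixed := @gen_fixed R n T (xs eps phi x0 y0) (ys eps phi x0 y0) (Nb eps phi x0 y0) HX HN.
split.
  move=> [i|i]; rewrite inE // => Hi t Ht /=.
  exact: fixed.
move=> j _.
case/set0Pn: HTh => -[i0|i0]; rewrite inE // => Hi0.
have [imax Hmax Hmaxle] := @ex_max R _ (fun i => #|Nb eps phi x0 y0 T i| == 0%N) (fun i => xs eps phi x0 y0 T i) i0 Hi0.
have [imin Hmin Hminle] := @ex_max R _ (fun i => #|Nb eps phi x0 y0 T i| == 0%N) (fun i => - xs eps phi x0 y0 T i) i0 Hi0.
apply/cvgr0Pnorm_lt => e e0.
have e2 : 0 < e / 2 by rewrite divr_gt0.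
have [M1 HM1] := @gen_upper R n phi T (xs eps phi x0 y0) (ys eps phi x0 y0) (Nb eps phi x0 y0) n0 phi01 HX HY HN _ _ Hmaxle Hmax _ e2.
have [M2 HM2] := @gen_upper R n phi T (fun t i => - xs eps phi x0 y0 t i) (fun t i => - ys eps phi x0 y0 t i) (Nb eps phi x0 y0) n0 phi01 HXn HYn HN _ _ Hminle Hmin _ e2.
have inTh : forall i, #|Nb eps phi x0 y0 T i| == 0%N -> inl i \in Theta eps phi x0 y0 T.
  by move=> i hi; rewrite inE.
have hle : z eps phi x0 y0 T (inl imin) <= z eps phi x0 y0 T (inl imax).
  exact: Hmaxle.
have bound : forall v, xs eps phi x0 y0 T imin - e / 2 <= v ->
    v <= xs eps phi x0 y0 T imax + e / 2 ->
    `|dist v (conv (Theta eps phi x0 y0 T) (z eps phi x0 y0 T))| < e.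
  move=> v h1 h2.
  rewrite ger0_norm; last first.
    apply: dist_ge0; exists (z eps phi x0 y0 T (inl imax)).
    have := @conv2 R _ (Theta eps phi x0 y0 T) (z eps phi x0 y0 T) _ _ 1 (inTh _ Hmax) (inTh _ Hmax).
    rewrite subrr mul0r addr0 mul1r; apply; by rewrite ler01 lexx.
  apply: le_lt_trans (_ : e / 2 < e); last by rewrite ltr_pdivrMr //; lra.
  exact: (@dist_bound R _ _ (z eps phi x0 y0 T) (inl imin) (inl imax) v (e / 2) (inTh _ Hmin) (inTh _ Hmax) hle (ltW e2) h1 h2).
exists (maxn M1 M2).+1 => // t Ht.
have Ht' : (maxn M1 M2 <= t.-1)%N by case: t Ht.
have Ht'' : (maxn M1 M2 <= t)%N by apply: ltnW.
case: j => i /=.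
  have [a1 _] := HM1 t (leq_trans (leq_maxl _ _) Ht'').
  have [a2 _] := HM2 t (leq_trans (leq_maxr _ _) Ht'').
  apply: bound; [have := a2 i | have := a1 i]; lra.
have [_ a1] := HM1 t.-1 (leq_trans (leq_maxl _ _) Ht').
have [_ a2] := HM2 t.-1 (leq_trans (leq_maxr _ _) Ht').
apply: bound; [have := a2 i | have := a1 i]; lra.
Qed.
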